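(* Let $k_1,k_2$ be positive integers and let $D$ be a digraph containing no subdivision of $C(k_1,k_2)$ as a subdigraph. Then $\chi(D)\le 3\,\alpha(D)\,k$, where $k=\max\{k_1,k_2\}$ and $\alpha(D)$ is the maximum size of a stable set of (the underlying graph of) $D$.
   Context: Digraphs are orientations of finite simple graphs (no loops, no multiple arcs, no pair of opposite arcs). The chromatic number $\chi(D)$ of a digraph is the chromatic number of its underlying undirected graph. For positive integers $k_1,k_2$, $C(k_1,k_2)$ is the oriented cycle formed by two internally disjoint directed $xy$-paths of lengths $k_1$ and $k_2$. A subdivision of a digraph $H$ is obtained by replacing each arc $(u,v)$ by a directed $uv$-path of length at least $1$, these paths being internally disjoint. *)

(* Defs.v *)
From mathcomp Require Import all_boot.
Set Implicit Arguments. Unset Strict Implicit. Unset Printing Implicit Defensive.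

Definition oriented_graph (T : finType) (a : rel T) : Prop :=
  irreflexive a /\ (forall x y, a x y -> ~~ a y x).

Definition uadj (T : finType) (a : rel T) : rel T := fun x y => a x y || a y x.

Definition colorable (T : finType) (a : rel T) (n : nat) : bool :=
  [exists f : {ffun T -> 'I_n}, [forall x, forall y, uadj a x y ==> (f x != f y)]].

Lemma colorable_card (T : finType) (a : rel T) (ha : irreflexive a) :
  exists n, colorable a n.
Proof.
exists #|T|; apply/existsP; exists [ffun x => enum_rank x].
apply/forallP => x; apply/forallP => y; apply/implyP => hxy.
rewrite !ffunE; apply/negP => /eqP /enum_rank_inj exy.
by move: hxy; rewrite exy /uadj ha.
Qed.

Definition chi (T : finType) (a : rel T) (ha : irreflexive a) : nat :=
  ex_minn (colorable_card ha).

Definition stable (T : finType) (a : rel T) (S : {set T}) : bool :=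
  [forall x in S, forall y in S, ~~ uadj a x y].

Definition alpha (T : finType) (a : rel T) : nat :=
  \max_(S : {set T} | stable a S) #|S|.

(* D contains a subdivision of C(k1,k2) as a subdigraph: there are vertices x, y
   and two internally disjoint directed xy-paths  x :: p1 ++ [y]  and
   x :: p2 ++ [y]  of lengths >= k1 and >= k2 respectively, which are distinct
   (they cannot both be the single arc xy). *)
Definition has_subdiv_C (T : finType) (a : rel T) (k1 k2 : nat) : Prop :=
  exists (x y : T) (p1 p2 : seq T),
    [/\ path a x (rcons p1 y), path a x (rcons p2 y),
        uniq (x :: rcons p1 y), uniq (x :: rcons p2 y)
      & [/\ [disjoint p1 & p2], k1 <= (size p1).+1, k2 <= (size p2).+1
          & ((p1 != [::]) || (p2 != [::]))]].

(* Main.v *)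
Require Import Defs.
From mathcomp Require Import all_boot zify.
Set Implicit Arguments. Unset Strict Implicit. Unset Printing Implicit Defensive.

Definition sl (T : Type) (f : nat -> T) i j := [seq f m | m <- iota i (j - i)].

Lemma size_sl (T : Type) (f : nat -> T) i j : size (sl f i j) = j - i.
Proof. by rewrite size_map size_iota. Qed.

Lemma sl_mem (T : eqType) (f : nat -> T) i j x :
  x \in sl f i j -> exists2 m, i <= m < j & x = f m.
Proof.
case/mapP=> m; rewrite mem_iota => hm ->; exists m => //; lia.
Qed.

Lemma sl_path_aux (T : Type) (a : rel T) (f : nat -> T) y len i :
  (forall m, i <= m -> m < i + len -> a (f m) (f m.+1)) ->
  a (f (i + len)) y ->
  path a (f i) (rcons [seq f m | m <- iota i.+1 len] y).
Proof.
elim: len i => [|len IH] i hc hl /=; first by rewrite addn0 in hl; rewrite hl.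
rewrite hc; [|lia|lia] => /=.
apply: IH => [m h1 h2|]; first by apply: hc; lia.
by rewrite addSnnS.
Qed.

Lemma sl_path (T : Type) (a : rel T) (f : nat -> T) n x y i j :
  (forall m, m.+1 < n -> a (f m) (f m.+1)) -> i <= j -> j <= n ->
  (if i < j then a x (f i) && a (f j.-1) y else a x y) ->
  path a x (rcons (sl f i j) y).
Proof.
move=> hc hij hjn; case: ltnP => hlt.
  case/andP=> h1 h2; rewrite /sl.
  have -> : j - i = (j - i.+1).+1 by lia.
  rewrite /= h1 /=; apply: sl_path_aux => [m h3 h4|]; first by apply: hc; lia.
  by have -> : i + (j - i.+1) = j.-1 by lia.
rewrite /sl; have -> : j - i = 0 by lia.
by rewrite /= => ->.
Qed.

Section Fin.
Context (T : finType) (a : rel T) (f : nat -> T) (n : nat)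
  (hc : forall m, m.+1 < n -> a (f m) (f m.+1))
  (hinj : forall m1 m2, m1 < n -> m2 < n -> f m1 = f m2 -> m1 = m2).

Lemma notin_sl u i j : u < n -> j <= n -> (u < i) || (j <= u) -> f u \notin sl f i j.
Proof.
move=> hu hj hr; apply/negP => /sl_mem [m hm /hinj] h.
have := h hu ltac:(lia); lia.
Qed.

Lemma sl_uniq i j : j <= n -> uniq (sl f i j).
Proof.
move=> hj; rewrite map_inj_in_uniq ?iota_uniq // => m1 m2.
rewrite !mem_iota => h1 h2; apply: hinj; lia.
Qed.

Lemma sl_disj i j i' j' : j <= n -> j' <= n -> (j <= i') || (j' <= i) ->
  [disjoint sl f i j & sl f i' j'].
Proof.
move=> hj hj' hd; rewrite disjoint_has; apply/hasPn => x /sl_mem [m hm ->].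
apply: notin_sl; lia.
Qed.

Lemma sl_ok u v i j : u < n -> v < n -> u != v ->
  (u < i) || (j <= u) -> (v < i) || (j <= v) -> i <= j -> j <= n ->
  (if i < j then a (f u) (f i) && a (f j.-1) (f v) else a (f u) (f v)) ->
  path a (f u) (rcons (sl f i j) (f v)) /\ uniq (f u :: rcons (sl f i j) (f v)).
Proof.
move=> hu hv huv hui hvi hij hjn hcond; split; first exact: sl_path hc hij hjn hcond.
rewrite /= mem_rcons inE rcons_uniq negb_or (notin_sl hu) // (notin_sl hv) // sl_uniq // !andbT.
apply/eqP => /hinj h; move: huv; rewrite h ?eqxx //.
Qed.

Lemma mk_subdiv k1 k2 u v i j i' j' :
  u < n -> v < n -> u != v ->
  (u < i) || (j <= u) -> (v < i) || (j <= v) -> i <= j -> j <= n ->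
  (u < i') || (j' <= u) -> (v < i') || (j' <= v) -> i' <= j' -> j' <= n ->
  (if i < j then a (f u) (f i) && a (f j.-1) (f v) else a (f u) (f v)) ->
  (if i' < j' then a (f u) (f i') && a (f j'.-1) (f v) else a (f u) (f v)) ->
  (j <= i') || (j' <= i) -> k1 <= (j - i).+1 -> k2 <= (j' - i').+1 ->
  (i < j) || (i' < j') -> has_subdiv_C a k1 k2.
Proof.
move=> hu hv huv h1 h2 h3 h4 h1' h2' h3' h4' hp hp' hd hk1 hk2 hne.
have [pa ua] := sl_ok hu hv huv h1 h2 h3 h4 hp.
have [pb ub] := sl_ok hu hv huv h1' h2' h3' h4' hp'.
exists (f u), (f v), (sl f i j), (sl f i' j'); split => //.
split; rewrite ?size_sl //; first exact: sl_disj.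
by case/orP: hne => h; apply/orP; [left|right]; rewrite -size_eq0 size_sl; lia.
Qed.

Lemma hcp m : 0 < m -> m < n -> a (f m.-1) (f m).
Proof. by move=> h1 h2; have := hc (m := m.-1); rewrite prednK //; apply. Qed.

Lemma cross_fwd k1 k2 i1 i2 i3 i4 :
  i1 < i2 -> i2 < i3 -> i3 < i4 -> i4 < n ->
  maxn k1 k2 <= i2 - i1 -> maxn k1 k2 <= i4 - i3 ->
  uadj a (f i1) (f i3) -> uadj a (f i2) (f i4) -> has_subdiv_C a k1 k2.
Proof.
move=> h12 h23 h34 h4n hg1 hg2.
have hk1 : k1 <= maxn k1 k2 by rewrite leq_maxl.
have hk2 : k2 <= maxn k1 k2 by rewrite leq_maxr.
rewrite /uadj => /orP [e13|e31] /orP [e24|e42].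
- apply: (@mk_subdiv k1 k2 i1 i4 i3 i4 i1.+1 i2.+1); try lia.
  + by rewrite ifT; [rewrite e13 hcp //; lia|lia].
  + by rewrite ifT; [rewrite hc /=; [rewrite /=|lia]|lia].
- apply: (@mk_subdiv k1 k2 i1 i2 i1.+1 i2 i3 i4.+1); try lia.
  + case: ifP => h; first by rewrite hc ?hcp //; lia.
    have e : i2 = i1.+1 by lia.
    by rewrite e; apply: hc; lia.
  + by rewrite ifT; [rewrite e13 /=|lia].
- apply: (@mk_subdiv k1 k2 i3 i4 i1 i2.+1 i3.+1 i4); try lia.
  + by rewrite ifT; [rewrite e31 /=|lia].
  + case: ifP => h; first by rewrite hc ?hcp //; lia.
    have e : i4 = i3.+1 by lia.
    by rewrite e; apply: hc; lia.
- apply: (@mk_subdiv k1 k2 i3 i2 i1 i2 i3.+1 i4.+1); try lia.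
  + by rewrite ifT; [rewrite e31 hcp //; lia|lia].
  + by rewrite ifT; [rewrite hc /=; [rewrite /=|lia]|lia].
Qed.

End Fin.

Lemma degen_col (X : finType) (E : rel X) (d : nat) :
  (forall x y, E x y -> E y x) -> (forall x, ~~ E x x) ->
  (forall S : {set X}, S != set0 -> exists2 v, v \in S & #|[set w in S | E v w]| <= d) ->
  exists g : X -> nat, (forall x, g x <= d) /\ (forall x y, E x y -> g x != g y).
Proof.
move=> Esym Eirr hdeg.
suff: forall N (S : {set X}), #|S| <= N -> exists g : X -> nat, (forall x, g x <= d) /\
    (forall x y, x \in S -> y \in S -> E x y -> g x != g y).
  move=> /(_ #|[set: X]| [set: X] (leqnn _)) [g [h1 h2]]; exists g; split => // x y.
  exact: h2; rewrite inE.
elim=> [|N IH] S hS.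
  exists (fun _ => 0); split => // x y hx.
  by move: hS; rewrite leqn0 => /eqP /card0_eq /(_ x); rewrite hx.
case: (S =P set0) => [->|/eqP hne].
  by exists (fun _ => 0); split => // x y; rewrite inE.
have [v hv hvd] := hdeg S hne.
have [|g' [hg'1 hg'2]] := IH (S :\ v); first by move: hS; rewrite (cardsD1 v) hv; lia.
set used := [seq g' w | w <- enum [set w in S | E v w]].
have : ~~ all (mem used) (iota 0 d.+1).
  apply/negP => /allP hall.
  have := uniq_leq_size (iota_uniq 0 d.+1) hall.
  by rewrite size_iota size_map -cardE; lia.
case/allPn => c; rewrite mem_iota => hc hcu.
exists (fun x => if x == v then c else g' x); split.
  by move=> x; case: eqP => _; [lia|exact: hg'1].
move=> x y hx hy hxy.
case: (x =P v) => [ex|nx]; case: (y =P v) => [ey|ny].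
- by move: hxy; rewrite ex ey (negbTE (Eirr v)).
- apply/eqP => ecy; move: hcu; rewrite ecy; apply/negP/negPn.
  by apply: map_f; rewrite mem_enum inE hy -ex hxy.
- apply/eqP => ecy; move: hcu; rewrite -ecy; apply/negP/negPn.
  by apply: map_f; rewrite mem_enum inE hx -ey Esym.
- by apply: hg'2 => //; rewrite !inE ?hx ?hy; apply/andP; split => //; apply/eqP.
Qed.

Lemma lowdeg (X : finType) (E : rel X) (h : X -> nat) (S : {set X}) :
  (forall x y, E x y -> E y x) -> (forall x, ~~ E x x) ->
  {in S &, injective h} ->
  (forall x1 x2 x3 x4, x1 \in S -> x2 \in S -> x3 \in S -> x4 \in S ->
     h x1 < h x2 -> h x2 < h x3 -> h x3 < h x4 -> E x1 x3 -> E x2 x4 -> False) ->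
  S != set0 -> exists2 v, v \in S & #|[set w in S | E v w]| <= 2.
Proof.
move=> Esym Eirr hinj hcr hne.
pose between u w := [exists z, [&& z \in S, h u < h z & h z < h w]].
pose long u w := [&& u \in S, w \in S, E u w, h u < h w & between u w].
have le1 : forall B : {set X}, (forall x y, x \in B -> y \in B -> x = y) -> #|B| <= 1.
  by move=> B hB; apply/card_le1_eqP => x y hx hy; apply: hB.
have split2 : forall v, v \in S ->
    (forall x y, x \in S -> y \in S -> E v x -> E v y -> h x < h v -> h y < h v -> x = y) ->
    (forall x y, x \in S -> y \in S -> E v x -> E v y -> h v < h x -> h v < h y -> x = y) ->
    #|[set w in S | E v w]| <= 2.
  move=> v hv hA hB.
  have sub : [set w in S | E v w] \subset
      [set w in S | E v w & h w < h v] :|: [set w in S | E v w & h v < h w].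
    apply/subsetP => w; rewrite !inE => /andP [hw hvw]; rewrite hw hvw /=.
    case: (ltngtP (h w) (h v)) => // e.
    by have := hinj _ _ hw hv e => ew; move: hvw; rewrite ew (negbTE (Eirr v)).
  apply: leq_trans (subset_leq_card sub) _.
  rewrite cardsU; apply: leq_trans (leq_subr _ _) _.
  have h1 := le1 [set w in S | E v w & h w < h v].
  have h2 := le1 [set w in S | E v w & h v < h w].
  suff: #|[set w in S | E v w & h w < h v]| <= 1 /\ #|[set w in S | E v w & h v < h w]| <= 1 by lia.
  split.
    apply: h1 => x y; rewrite !inE => /and3P [hx1 hx2 hx3] /and3P [hy1 hy2 hy3].
    exact: (hA x y).
  apply: h2 => x y; rewrite !inE => /and3P [hx1 hx2 hx3] /and3P [hy1 hy2 hy3].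
  exact: (hB x y).
case: (boolP [exists u, exists w, long u w]) => [hl|hnl]; last first.
  have [v hv] : exists v, v \in S by apply/set0Pn. exists v => //; apply: split2 => // x y hx hy ex ey hxv hyv.
  - case: (ltngtP (h x) (h y)) => e; last exact: hinj.
    + case/negP: hnl; apply/existsP; exists x; apply/existsP; exists v.
      by rewrite /long hx hv Esym //= hxv; apply/existsP; exists y; rewrite hy e hyv.
    + case/negP: hnl; apply/existsP; exists y; apply/existsP; exists v.
      by rewrite /long hy hv Esym //= hyv; apply/existsP; exists x; rewrite hx e hxv.
  - case: (ltngtP (h x) (h y)) => e; last exact: hinj.
    + case/negP: hnl; apply/existsP; exists v; apply/existsP; exists y.
      by rewrite /long hv hy ey hyv; apply/existsP; exists x; rewrite hx e hxv.
    + case/negP: hnl; apply/existsP; exists v; apply/existsP; exists x.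
      by rewrite /long hv hx ex hxv; apply/existsP; exists y; rewrite hy e hyv.
pose P m := [exists u, exists w, long u w && (h w - h u == m)].
have exP : exists m, P m.
  by case/existsP: hl => u /existsP [w hw]; exists (h w - h u); apply/existsP; exists u;
     apply/existsP; exists w; rewrite hw eqxx.
case: (ex_minnP exP) => m0 /existsP [u /existsP [w /andP [luw /eqP em0]]] hmin.
have hmin' : forall u' w', long u' w' -> m0 <= h w' - h u'.
  by move=> u' w' l; apply: hmin; apply/existsP; exists u'; apply/existsP; exists w'; rewrite l eqxx.
case/and5P: (luw) => hu hw euw huw /existsP [z0 /and3P [hz0 hz01 hz02]].
pose Q m := [exists z, [&& z \in S, h u < h z, h z < h w & h z == m]].
have exQ : exists m, Q m by exists (h z0); apply/existsP; exists z0; rewrite hz0 hz01 hz02 eqxx.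
case: (ex_minnP exQ) => m1 /existsP [v /and4P [hv huv hvw /eqP em1]] hmin1.
have hmin1' : forall z, z \in S -> h u < h z -> h z < h w -> h v <= h z.
  by move=> z hz h1 h2; rewrite em1; apply: hmin1; apply/existsP; exists z; rewrite hz h1 h2 eqxx.
exists v => //; apply: split2 => //.
- suff key : forall x, x \in S -> E v x -> h x < h v -> x = u.
    by move=> x y hx hy ex ey hx' hy'; rewrite (key x) // (key y).
  move=> x hx ex hxv; case: (ltngtP (h x) (h u)) => e.
  + exfalso; apply: (hcr x u v w hx hu hv hw e huv hvw _ euw); exact: Esym.
  + by have := hmin1' x hx e ltac:(lia); lia.
  + exact: hinj.
- have nob : forall x, x \in S -> E v x -> h v < h x ->
      forall z, z \in S -> h v < h z -> h z < h x -> False.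
    move=> x hx ex hvx z hz h1 h2.
    case: (ltnP (h w) (h x)) => e.
      by apply: (hcr u v w x).
    have hb : between v x by apply/existsP; exists z; rewrite hz h1 h2.
    have := hmin' v x; rewrite /long hv hx ex hvx hb => /(_ isT); lia.
  move=> x y hx hy ex ey hvx hvy.
  case: (ltngtP (h x) (h y)) => e; last exact: hinj.
  + by exfalso; apply: (nob y hy ey hvy x).
  + by exfalso; apply: (nob x hx ex hvx y).
Qed.

Definition ra (T : Type) (a : rel T) : rel T := fun u v => a v u.
Definition verts (T : Type) (Ps : seq (T * seq T)) := flatten [seq p.1 :: p.2 | p <- Ps].
Definition PP (T : finType) (a : rel T) (U : {set T}) (Ps : seq (T * seq T)) :=
  [/\ all (fun p => path (ra a) p.1 p.2) Ps, uniq (verts Ps) & verts Ps =i U].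

Lemma verts_perm (T : eqType) (Ps Qs : seq (T * seq T)) :
  perm_eq Ps Qs -> perm_eq (verts Ps) (verts Qs).
Proof. by move=> h; apply: perm_flatten; apply: perm_map. Qed.

Lemma fst_verts (T : eqType) (Ps : seq (T * seq T)) : {subset map fst Ps <= verts Ps}.
Proof.
elim: Ps => //= p Ps IH x; rewrite inE => /orP [/eqP ->|h]; first by rewrite inE eqxx.
by rewrite inE mem_cat (IH x h) !orbT.
Qed.

Lemma uniq_fst (T : eqType) (Ps : seq (T * seq T)) : uniq (verts Ps) -> uniq (map fst Ps).
Proof.
elim: Ps => // p Ps IH.
have -> : verts (p :: Ps) = (p.1 :: p.2) ++ verts Ps by [].
rewrite cat_uniq => /and3P [_ hn hu] /=.
rewrite IH // andbT; apply/negP => /fst_verts h; case/hasP: hn.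
by exists p.1 => //; rewrite inE eqxx.
Qed.

Lemma nonstable (T : finType) (a : rel T) (S : {set T}) :
  ~~ stable a S -> exists x y, [/\ x \in S, y \in S & uadj a x y].
Proof.
case/forallPn => x; rewrite negb_imply => /andP [hx /forallPn [y]].
rewrite negb_imply negbK => /andP [hy h]; by exists x, y.
Qed.

Lemma attach (T : finType) (a : rel T) (U : {set T}) y Qs w sq :
  PP a (U :\ y) Qs -> (w, sq) \in Qs -> a w y -> y \in U ->
  PP a U ((y, w :: sq) :: rem (w, sq) Qs).
Proof.
move=> [hall hu hv] hq hwy hyU.
have pq := perm_to_rem hq.
have pv : perm_eq (verts ((y, w :: sq) :: rem (w, sq) Qs)) (y :: verts Qs).
  by rewrite /= perm_cons perm_sym (verts_perm pq).
have hyn : y \notin verts Qs by rewrite hv in_setD1 eqxx.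
split.
- rewrite /= /ra hwy /=; apply/andP; split; first by have := allP hall _ hq.
  by apply/allP => p /mem_rem hp; apply: (allP hall).
- by rewrite (perm_uniq pv) /= hyn hu.
- move=> v; rewrite (perm_mem pv) inE hv in_setD1.
  by case: (v =P y) => [->|]; rewrite ?hyU.
Qed.

Lemma GM_step (T : finType) (a : rel T) (ha : irreflexive a) N (U : {set T}) Ps :
  #|U| < N -> PP a U Ps -> alpha a < size Ps ->
  exists Qs, [/\ PP a U Qs, size Qs = (size Ps).-1 & {subset map fst Qs <= map fst Ps}].
Proof.
elim: N U Ps => [//|N IH] U Ps hN hPP hal.
have [hall hu hv] := hPP.
have ufst := uniq_fst hu.
have hnst : ~~ stable a [set x in map fst Ps].
  apply/negP => hst; have := @leq_bigmax_cond _ (stable a) (fun S : {set T} => #|S|) _ hst.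
  rewrite cardsE (card_uniqP ufst) size_map => h; move: hal; rewrite ltnNge; apply/negP/negPn; exact: h.
have main : forall x y, x \in map fst Ps -> y \in map fst Ps -> a x y ->
  exists Qs, [/\ PP a U Qs, size Qs = (size Ps).-1 & {subset map fst Qs <= map fst Ps}].
  move=> x y hx hy hxy.
  have nxy : x != y by apply/eqP => e; move: hxy; rewrite e ha.
  case/mapP: hx => [[x' sx] hpx /= ex]; subst x'.
  case/mapP: hy => [[y' sy] hpy /= ey]; subst y'.
  have [Ps0 eP0] : {Ps0 | Ps0 = rem (y, sy) Ps} by exists (rem (y, sy) Ps).
  have p0 : perm_eq Ps ((y, sy) :: Ps0) by rewrite eP0; exact: perm_to_rem hpy.
  have hpx0 : (x, sx) \in Ps0.
    by move: hpx; rewrite (perm_mem p0) inE => /orP [/eqP [e _]|//]; move: nxy; rewrite e eqxx.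
  have sub0 : {subset Ps0 <= Ps} by move=> p; rewrite eP0 => /mem_rem.
  have pathy := allP hall _ hpy; rewrite /= in pathy.
  case: sy pathy hpy p0 eP0 => [|z sy'] pathy hpy p0 eP0.
  + set Ps1 := rem (x, sx) Ps0.
    have p1 : perm_eq Ps0 ((x, sx) :: Ps1) := perm_to_rem hpx0.
    have p01 : perm_eq Ps ((y, [::]) :: (x, sx) :: Ps1).
      by apply: perm_trans p0 _; rewrite perm_cons.
    exists ((y, x :: sx) :: Ps1); split.
    * split.
      - rewrite /= /ra hxy /=; apply/andP; split; first by have := allP hall _ hpx.
        by apply/allP => p /mem_rem /sub0 hp; apply: (allP hall).
      - by rewrite -(perm_uniq (verts_perm p01)).
      - by move=> v; rewrite -hv (perm_mem (verts_perm p01)).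
    * by rewrite (perm_size p01).
    * move=> t; rewrite /= inE => /orP [/eqP ->|/mapP [p /mem_rem /sub0 hp ->]].
        by apply: map_f hpy.
      exact: map_f.
  + set Ps' := (z, sy') :: Ps0.
    have pv : perm_eq (verts Ps) (y :: verts Ps') by apply: (verts_perm p0).
    have hyU : y \in U by rewrite -hv (perm_mem pv) inE eqxx.
    have uv' : uniq (y :: verts Ps') by rewrite -(perm_uniq pv).
    have hPP' : PP a (U :\ y) Ps'.
      split.
      - rewrite /= ; apply/andP; split; first by case/andP: pathy.
        apply/allP => p /sub0; exact: (allP hall).
      - by case/andP: uv'.
      - move=> v; rewrite in_setD1 -hv (perm_mem pv) inE.
        case: (v =P y) => [->|//]; by case/andP: uv' => /negbTE ->.
    have hsz : size Ps' = size Ps by rewrite (perm_size p0).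
    have [|Qs' [hQ hsQ hsubQ]] := IH (U :\ y) Ps' _ hPP' ltac:(by rewrite hsz).
      by move: hN; rewrite (cardsD1 y U) hyU add1n ltnS.
    have [hallQ huQ hvQ] := hQ.
    have ufQ := uniq_fst huQ.
    have uR : uniq (map fst Ps0).
      have uv2 : uniq (verts Ps') by case/andP: uv'.
      by have := uniq_fst uv2; rewrite /= => /andP [].
    have finish : forall w sq, (w, sq) \in Qs' -> a w y ->
        (forall t, t \in map fst (rem (w, sq) Qs') -> t \in map fst Ps) ->
        exists Qs, [/\ PP a U Qs, size Qs = (size Ps).-1 & {subset map fst Qs <= map fst Ps}].
      move=> w sq hq hwy ht; exists ((y, w :: sq) :: rem (w, sq) Qs'); split.
      * exact: attach.
      * rewrite /= size_rem // hsQ -hsz /Ps' /=.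
        have h0 : 0 < size Ps0 by rewrite lt0n size_eq0; apply/eqP => e; move: hpx0; rewrite e.
        by case: (size Ps0) h0.
      * move=> t; rewrite /= inE => /orP [/eqP ->|]; [exact: map_f hpy|exact: ht].
    have sub0f : forall t, t \in map fst Ps0 -> t \in map fst Ps.
      by move=> t /mapP [p /sub0 hp ->]; apply: map_f.
    case: (boolP (z \in map fst Qs')) => hz.
    * case/mapP: hz => [[z' sq] hq /= ez]; subst z'.
      apply: (finish z sq hq); first by case/andP: pathy.
      move=> t ht.
      have pf : perm_eq (map fst Qs') (z :: map fst (rem (z, sq) Qs')).
        by have := perm_map fst (perm_to_rem hq).
      have : t \in map fst Qs' by rewrite (perm_mem pf) inE ht orbT.
      move/hsubQ; rewrite inE => /orP [/eqP /= etz|]; last exact: sub0f.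
      move: (perm_uniq pf); rewrite ufQ => /esym; rewrite cons_uniq => /andP [hn _].
      by move: hn; rewrite -{1}etz ht.
    * have hxQ : x \in map fst Qs'.
        apply/negPn/negP => hxn.
        have sub : {subset map fst Qs' <= rem x (map fst Ps0)}.
          move=> t ht; rewrite (mem_rem_uniq _ uR) inE.
          have := hsubQ t ht; rewrite inE => /orP [/eqP /= etz|ht0].
            by move: hz; rewrite -etz ht.
          by rewrite ht0 andbT; apply/eqP => etx; move: hxn; rewrite -etx ht.
        have := uniq_leq_size ufQ sub.
        have hxR : x \in map fst Ps0 by apply: (map_f fst hpx0).
        rewrite size_rem // !size_map hsQ /Ps' /=.
        have h0 : 0 < size Ps0 by rewrite lt0n size_eq0; apply/eqP => e; move: hpx0; rewrite e.
        by case: (size Ps0) h0 => // m _ /=; rewrite ltnn.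
      case/mapP: hxQ => [[x' sq] hq /= ex]; subst x'.
      apply: (finish x sq hq hxy) => t /mapP [p /mem_rem hp ->].
      have := hsubQ _ (map_f fst hp); rewrite inE => /orP [/eqP /= etz|]; last exact: sub0f.
      by move: hz; rewrite -etz (map_f fst hp).
have [x [y [hx hy]]] := nonstable hnst.
rewrite !inE in hx hy; rewrite /uadj => /orP [h|h]; [exact: main h|exact: main h].
Qed.

Lemma GM (T : finType) (a : rel T) (ha : irreflexive a) :
  exists Ps, PP a [set: T] Ps /\ size Ps <= alpha a.
Proof.
suff: forall d Ps, PP a [set: T] Ps -> size Ps <= alpha a + d ->
    exists Qs, PP a [set: T] Qs /\ size Qs <= alpha a.
  move=> /(_ #|T| [seq (v, [::]) | v <- enum T]); apply.
    split.
    - by apply/allP => p /mapP [v _ ->].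
    - have -> : verts [seq (v, [::]) | v <- enum T] = enum T.
        by rewrite /verts -map_comp; elim: (enum T) => //= v s ->.
      exact: enum_uniq.
    - move=> v; rewrite inE.
      have -> : verts [seq (v, [::]) | v <- enum T] = enum T.
        by rewrite /verts -map_comp; elim: (enum T) => //= v' s ->.
      by rewrite mem_enum.
  by rewrite size_map -cardE leq_addl.
elim=> [|d IH] Ps hP hs; first by exists Ps; rewrite addn0 in hs.
case: (leqP (size Ps) (alpha a)) => h; first by exists Ps.
have [Qs [hQ hsz _]] := GM_step ha (ltnSn #|[set: T]|) hP h.
by apply: (IH Qs hQ); rewrite hsz; lia.
Qed.

Lemma cross_bwd (T : finType) (a : rel T) (f : nat -> T) n k1 k2 j1 j2 j3 j4 :
  (forall m, m.+1 < n -> a (f m.+1) (f m)) ->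
  (forall m1 m2, m1 < n -> m2 < n -> f m1 = f m2 -> m1 = m2) ->
  j1 < j2 -> j2 < j3 -> j3 < j4 -> j4 < n ->
  maxn k1 k2 <= j2 - j1 -> maxn k1 k2 <= j4 - j3 ->
  uadj a (f j1) (f j3) -> uadj a (f j2) (f j4) -> has_subdiv_C a k1 k2.
Proof.
move=> hc hinj h12 h23 h34 h4n g1 g2 u13 u24.
pose g m := f (n.-1 - m).
have e : forall j, j < n -> n.-1 - (n.-1 - j) = j by move=> j hj; lia.
apply: (@cross_fwd T a g n _ _ k1 k2 (n.-1 - j4) (n.-1 - j3) (n.-1 - j2) (n.-1 - j1)); try lia.
- move=> m hm; rewrite /g.
  have -> : n.-1 - m = (n.-1 - m.+1).+1 by lia.
  apply: hc; lia.
- move=> m1 m2 hm1 hm2; rewrite /g => /hinj; lia.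
- by rewrite /g !e; [rewrite /uadj orbC|lia|lia].
- by rewrite /g !e; [rewrite /uadj orbC|lia|lia].
Qed.

Lemma res_gap K j1 j2 : 0 < K -> j1 < j2 -> j1 %% K = j2 %% K -> K <= j2 - j1.
Proof.
move=> hK h12 e; apply: dvdn_leq; first by rewrite subn_gt0.
by rewrite -eqn_mod_dvd ?(ltnW h12) // e.
Qed.

Lemma divmod_uniq m p1 p2 b1 b2 : p1 * m + b1 = p2 * m + b2 -> b1 < m -> b2 < m ->
  p1 = p2 /\ b1 = b2.
Proof.
move=> e hb1 hb2.
suff ep : p1 = p2 by split => //; move: e; rewrite ep => /addnI.
case: (ltngtP p1 p2) => // h; exfalso.
- have : p1.+1 * m <= p2 * m by rewrite leq_mul2r h orbT.
  rewrite mulSn; lia.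
- have : p2.+1 * m <= p1 * m by rewrite leq_mul2r h orbT.
  rewrite mulSn; lia.
Qed.

Lemma col_bound p A K r g : p < A -> r < K -> g <= 2 ->
  p * (3 * K) + (r * 3 + g) < 3 * A * K.
Proof.
move=> hp hr hg.
have h1 : r * 3 + g < 3 * K by lia.
have h2 : p.+1 * (3 * K) <= A * (3 * K) by rewrite leq_mul2r hp orbT.
have -> : 3 * A * K = A * (3 * K) by rewrite mulnCA mulnA.
by rewrite mulSn in h2; lia.
Qed.

Lemma uniq_flatten_mem (T : eqType) (ss : seq (seq T)) s :
  uniq (flatten ss) -> s \in ss -> uniq s.
Proof.
elim: ss => //= s' ss IH; rewrite cat_uniq => /and3P [h1 _ h3].
by rewrite inE => /orP [/eqP ->|]; [|exact: IH].
Qed.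

Theorem corollary1 (T : finType) (a : rel T) (ha : irreflexive a)
    (hanti : forall x y, a x y -> ~~ a y x) (k1 k2 : nat) :
  0 < k1 -> 0 < k2 -> ~ has_subdiv_C a k1 k2 ->
  chi ha <= 3 * alpha a * maxn k1 k2.
Proof.
move=> hk1 hk2 hnoC.
set K := maxn k1 k2.
have hK : 0 < K by rewrite /K leq_max hk1.
have [Ps [[hall hu hv] hsz]] := GM ha.
set Ls := [seq p.1 :: p.2 | p <- Ps].
pose pidx (v : T) := find (fun L : seq T => v \in L) Ls.
pose Lv v := nth [::] Ls (pidx v).
pose jv v := index v (Lv v).
have hhas : forall v, has (fun L : seq T => v \in L) Ls.
  move=> v; have : v \in verts Ps by rewrite hv inE.
  by case/flattenP => L hL hvL; apply/hasP; exists L.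
have hpid : forall v, pidx v < size Ls by move=> v; rewrite -has_find.
have hin : forall v, v \in Lv v by move=> v; exact: (nth_find [::] (hhas v)).
have hLs : forall v, Lv v \in Ls by move=> v; exact: mem_nth.
have hLuniq : forall v, uniq (Lv v) by move=> v; exact: uniq_flatten_mem hu (hLs v).
have hLarc : forall v x0 m, m.+1 < size (Lv v) ->
    a (nth x0 (Lv v) m.+1) (nth x0 (Lv v) m).
  move=> v x0 m; have /mapP [[t s] hp ->] := hLs v.
  have := allP hall _ hp => /= /(pathP x0) hP /= hm.
  by have := hP m hm.
pose E := fun v w => [&& v != w, uadj a v w, pidx v == pidx w & jv v %% K == jv w %% K].
have Esym : forall x y, E x y -> E y x.
  move=> x y /and4P [h1 h2 h3 h4]; apply/and4P; split.
  - by rewrite eq_sym.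
  - by rewrite /uadj orbC.
  - by rewrite eq_sym.
  - by rewrite eq_sym.
have Eirr : forall x, ~~ E x x by move=> x; rewrite /E eqxx.
have hdeg : forall S : {set T}, S != set0 ->
    exists2 v, v \in S & #|[set w in S | E v w]| <= 2.
  move=> S /set0Pn [v0 hv0].
  set S0 := [set w in S | (pidx w == pidx v0) && (jv w %% K == jv v0 %% K)].
  have hS0 : S0 != set0 by apply/set0Pn; exists v0; rewrite inE hv0 !eqxx.
  have inS0 : forall w, w \in S0 -> [/\ w \in S, Lv w = Lv v0 & jv w %% K = jv v0 %% K].
    move=> w; rewrite inE => /and3P [h1 /eqP h2 /eqP h3]; split => //.
    by rewrite /Lv h2.
  have [v hvS0 hc] : exists2 v, v \in S0 & #|[set w in S0 | E v w]| <= 2.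
    apply: (lowdeg (h := jv)) => //.
    - move=> w1 w2 /inS0 [_ e1 _] /inS0 [_ e2 _] ej.
      move: ej; rewrite /jv => ej.
      rewrite -[w1](nth_index w1 (hin w1)) -[w2](nth_index w1 (hin w2)) ej.
      by rewrite e1 e2.
    - move=> x1 x2 x3 x4 /inS0 [_ e1 r1] /inS0 [_ e2 r2] /inS0 [_ e3 r3] /inS0 [_ e4 r4]
        l12 l23 l34 /and4P [_ u13 _ _] /and4P [_ u24 _ _].
      apply: hnoC.
      pose L := Lv v0.
      have fx : forall x, Lv x = L -> nth v0 L (jv x) = x.
        by move=> x ex; rewrite /jv ex nth_index // -ex.
      have hjn : forall x, Lv x = L -> jv x < size L.
        by move=> x ex; rewrite /jv ex index_mem -ex.
      apply: (@cross_bwd T a (nth v0 L) (size L) k1 k2 (jv x1) (jv x2) (jv x3) (jv x4)) => //.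
      + by move=> m hm; apply: hLarc.
      + move=> m1 m2 hm1 hm2 /eqP; rewrite nth_uniq //; [by move/eqP|exact: hLuniq].
      + exact: hjn e4.
      + by apply: res_gap => //; rewrite r1 r2.
      + by apply: res_gap => //; rewrite r3 r4.
      + by rewrite !fx.
      + by rewrite !fx.
  exists v; first by case/inS0: hvS0.
  apply: leq_trans hc; apply: subset_leq_card; apply/subsetP => w; rewrite !inE.
  case/andP=> hw hE; rewrite hw hE andbT /=.
  case/and4P: (hE) => _ _ /eqP ep /eqP er.
  move: hvS0; rewrite inE => /and3P [_ /eqP ep0 /eqP er0].
  by rewrite -ep -er ep0 er0 !eqxx.
have [g [hg1 hg2]] := degen_col Esym Eirr hdeg.
pose c v := pidx v * (3 * K) + (jv v %% K * 3 + g v).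
have hcb : forall v, c v < 3 * alpha a * K.
  move=> v; apply: col_bound => //; last exact: ltn_pmod.
  by apply: leq_trans (hpid v) _; rewrite size_map.
have hcol : colorable a (3 * alpha a * K).
  apply/existsP; exists [ffun v => Ordinal (hcb v)].
  apply/forallP => v; apply/forallP => w; apply/implyP => hvw; rewrite !ffunE.
  apply/negP => /eqP [] /divmod_uniq [].
  - by have := ltn_pmod (jv v) hK; have := hg1 v; lia.
  - by have := ltn_pmod (jv w) hK; have := hg1 w; lia.
  move=> ep eb.
  have [er eg] : jv v %% K = jv w %% K /\ g v = g w.
    by move: eb (hg1 v) (hg1 w); clear; lia.
  have hne : v != w by apply/eqP => e; move: hvw; rewrite e /uadj ha.
  have : E v w by rewrite /E hne hvw ep er !eqxx.
  by move/hg2; rewrite eg eqxx.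
rewrite /chi; case: ex_minnP => m _ hm; exact: hm.
Qed.
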